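(* Let $D=(E,\mathcal{F})$ be a delta-matroid and let $e_1,e_2\in E$ with $e_1\neq e_2$. Then the primal type of $e_2$ in $D-e_1$ is the same as its primal type in $D$.
   Context: A delta-matroid is a pair $D=(E,\mathcal{F})$ with $E$ finite, $\mathcal{F}$ a nonempty collection of subsets of $E$ (feasible sets), such that for all $X,Y\in\mathcal{F}$ and $u\in X\Delta Y$ there is $v\in X\Delta Y$ (possibly $v=u$) with $X\Delta\{u,v\}\in\mathcal{F}$. The twist by $A\subseteq E$ is $D*A=(E,\{A\Delta X:X\in\mathcal{F}\})$. An element $e$ is a coloop if it lies in every feasible set. The deletion $D-e$ is $(E-e,\{F\in\mathcal{F}: e\notin F\})$ if $e$ is not a coloop, and $(E-e,\{F-e: F\in\mathcal{F}\})$ if $e$ is a coloop. Let $\mathcal{F}_{\min}(D)$ be the set of minimum-cardinality feasible sets. An element $e$ is a ribbon loop if $e$ lies in no member of $\mathcal{F}_{\min}(D)$; a ribbon loop $e$ is non-orientable if it is still a ribbon loop in $D*e$, and orientable otherwise. The primal type of $e$ in $D$ is $p$ if $e$ is not a ribbon loop, $u$ if it is an orientable ribbon loop, and $t$ if it is a non-orientable ribbon loop. *)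

(* Defs.v *)
From HB Require Import structures.
From mathcomp Require Import all_boot.
Set Implicit Arguments. Unset Strict Implicit. Unset Printing Implicit Defensive.

Section DeltaMatroid.
Variable T : finType.

Definition symdiff (A B : {set T}) : {set T} := (A :\: B) :|: (B :\: A).

Definition is_delta_matroid (E : {set T}) (F : {set {set T}}) : Prop :=
  F != set0 /\
  (forall X, X \in F -> X \subset E) /\
  (forall X Y u, X \in F -> Y \in F -> u \in symdiff X Y ->
     exists2 v, v \in symdiff X Y & symdiff X [set u; v] \in F).

Definition twist (F : {set {set T}}) (A : {set T}) : {set {set T}} :=
  [set symdiff A X | X in F].

Definition is_coloop (F : {set {set T}}) (e : T) : bool :=
  [forall X in F, e \in X].

Definition del_ground (E : {set T}) (e : T) : {set T} := E :\ e.
Definition del_feas (F : {set {set T}}) (e : T) : {set {set T}} :=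
  if is_coloop F e then [set X :\ e | X in F]
  else [set X in F | e \notin X].

Definition Fmin (F : {set {set T}}) : {set {set T}} :=
  [set X in F | [forall Y in F, #|X| <= #|Y|]].

Definition ribbon_loop (F : {set {set T}}) (e : T) : bool :=
  [forall X in Fmin F, e \notin X].

End DeltaMatroid.

Inductive ptype := Tp | Tu | Tt.

Definition primal_type (T : finType) (F : {set {set T}}) (e : T) : ptype :=
  if ~~ ribbon_loop F e then Tp
  else if ribbon_loop (twist F [set e]) e then Tt else Tu.

(* Main.v *)
Require Import Defs.
From mathcomp Require Import all_boot.
Set Implicit Arguments. Unset Strict Implicit. Unset Printing Implicit Defensive.

Definition exch (T : finType) (G : {set {set T}}) :=
  forall X Y u, X \in G -> Y \in G -> u \in symdiff X Y ->
     exists2 v, v \in symdiff X Y & symdiff X [set u; v] \in G.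

Lemma in_symdiff (T : finType) (A B : {set T}) x :
  (x \in symdiff A B) = (x \in A) (+) (x \in B).
Proof. by rewrite /symdiff !inE; case: (x \in A); case: (x \in B). Qed.

Lemma Fmin_in (T : finType) (G : {set {set T}}) X :
  (X \in Fmin G) = (X \in G) && [forall Y in G, #|X| <= #|Y|].
Proof. by rewrite /Fmin inE. Qed.

Lemma exchK (T : finType) (G : {set {set T}}) e X Y : exch G -> X \in G ->
  (forall Z, Z \in G -> #|X| <= #|Z|) -> e \in X -> Y \in G -> e \notin Y ->
  exists Z, [/\ Z \in G, e \notin Z, #|Z| = #|X| &
     forall x, x \in X -> x != e -> x \in Z].
Proof.
move=> ex XG Xmin eX YG eY.
have u : e \in symdiff X Y by rewrite in_symdiff eX (negbTE eY).
case: (ex X Y e XG YG u) => v vXY WG.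
set W := symdiff X [set e; v] in WG *.
have vX : v \notin X.
  apply/negP => vX.
  have : W \proper X.
    apply/properP; split.
      apply/subsetP => x; rewrite in_symdiff !inE.
      case xX: (x \in X) => //= /orP[/eqP xe|/eqP xv].
        by rewrite xe eX in xX.
      by rewrite xv vX in xX.
    exists e => //. by rewrite in_symdiff !inE eqxx eX.
  by move/proper_card; rewrite ltnNge Xmin.
have ve : v != e by apply: contraNneq vX => ->.
have WE : W = v |: (X :\ e).
  apply/setP => x; rewrite in_symdiff !inE.
  case: (eqVneq x e) => [->|xe]; first by rewrite eX eq_sym (negbTE ve).
  case: (eqVneq x v) => [->|xv] /=; first by rewrite (negbTE vX).
  by case: (x \in X).
exists W; split => //.
- by rewrite WE !inE eq_sym (negbTE ve) eqxx.
- rewrite WE cardsU1 !inE (negbTE vX) andbF [RHS](cardsD1 e) eX //.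
- by move=> x xX xe; rewrite WE !inE xe xX orbT.
Qed.

Lemma rl_coloop (T : finType) (G : {set {set T}}) e f :
  is_coloop G e -> e != f ->
  ribbon_loop [set X :\ e | X in G] f = ribbon_loop G f.
Proof.
move=> /forall_inP col ef.
have cardE X : X \in G -> #|X| = #|X :\ e|.+1.
  by move=> XG; rewrite (cardsD1 e X) col.
apply/forall_inP/forall_inP => H X.
- rewrite Fmin_in => /andP[XG /forall_inP Xm].
  have : X :\ e \in Fmin [set X :\ e | X in G].
    rewrite Fmin_in; apply/andP; split; first exact: imset_f.
    apply/forall_inP => Z /imsetP[Y YG ->].
    by move: (Xm Y YG); rewrite (cardE X XG) (cardE Y YG) ltnS.
  by move/H; rewrite !inE eq_sym ef.
- rewrite Fmin_in => /andP[/imsetP[Y YG ->] /forall_inP Ym].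
  have fY : f \notin Y.
    apply: H; rewrite Fmin_in YG; apply/forall_inP => W WG.
    have := Ym (W :\ e) (imset_f _ WG).
    by rewrite (cardE Y YG) (cardE W WG) ltnS.
  by rewrite !inE (negbTE fY) andbF.
Qed.

Lemma rl_nc (T : finType) (G : {set {set T}}) e f : exch G ->
  ~~ is_coloop G e -> e != f ->
  ribbon_loop [set X in G | e \notin X] f = ribbon_loop G f.
Proof.
move=> ex /forall_inPn [Y0 Y0G eY0] ef.
set H := [set X in G | e \notin X].
have FH : forall X, (X \in Fmin H) = (X \in Fmin G) && (e \notin X).
  move=> X; apply/idP/idP.
  + rewrite Fmin_in inE => /andP[/andP[XG eX] /forall_inP Xm].
    rewrite Fmin_in XG eX andbT /=. apply/forall_inP => Y YG.
    have [Z ZG Zm] := @arg_minnP _ Y0 (fun Z => Z \in G) (fun Z : {set T} => #|Z|) Y0G.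
    apply: leq_trans (Zm Y YG).
    case eZ: (e \in Z).
    * have [W [WG eW cW _]] := exchK ex ZG Zm eZ XG eX.
      by rewrite -cW; apply: Xm; rewrite inE WG eW.
    * by apply: Xm; rewrite inE ZG eZ.
  + case/andP; rewrite Fmin_in => /andP[XG /forall_inP Xm] eX.
    rewrite Fmin_in inE XG eX /=; apply/forall_inP => Y.
    by rewrite inE => /andP[YG _]; apply: Xm.
rewrite /ribbon_loop; apply/forall_inP/forall_inP => Hf X.
- move=> XF; apply/negP => fX; case eX: (e \in X).
  * move: XF; rewrite Fmin_in => /andP[XG /forall_inP Xm].
    have [W [WG eW cW sW]] := exchK ex XG Xm eX Y0G eY0.
    have : W \in Fmin H.
      rewrite FH eW andbT Fmin_in WG; apply/forall_inP => Z ZG.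
      by rewrite cW; apply: Xm.
    have fW : f \in W by apply: sW => //; rewrite eq_sym.
    by move/Hf; rewrite fW.
  * have : X \in Fmin H by rewrite FH XF eX.
    by move/Hf; rewrite fX.
- by move=> XH; apply: Hf; move: XH; rewrite FH => /andP[].
Qed.

Lemma exch_twist (T : finType) (G : {set {set T}}) A :
  exch G -> exch (twist G A).
Proof.
move=> ex X' Y' u /imsetP[X XG ->] /imsetP[Y YG ->].
have E : symdiff (symdiff A X) (symdiff A Y) = symdiff X Y.
  by apply/setP => x; rewrite !in_symdiff;
     case: (x \in A); case: (x \in X); case: (x \in Y).
rewrite E => uXY; case: (ex X Y u XG YG uXY) => v vXY WG; exists v => //.
have -> : symdiff (symdiff A X) [set u; v] = symdiff A (symdiff X [set u; v]).
  by apply/setP => x; rewrite !in_symdiff;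
     case: (x \in A); case: (x \in X); case: (x \in [set u; v]).
exact: imset_f.
Qed.

Lemma twist_del (T : finType) (F : {set {set T}}) e1 e2 : e1 != e2 ->
  twist (del_feas F e1) [set e2] = del_feas (twist F [set e2]) e1.
Proof.
move=> ne.
have key X : (e1 \in symdiff [set e2] X) = (e1 \in X)
  by rewrite in_symdiff inE (negbTE ne).
have col : is_coloop (twist F [set e2]) e1 = is_coloop F e1.
  apply/forall_inP/forall_inP => H X XF.
  - by rewrite -key; apply: H; exact: imset_f.
  - by case/imsetP: XF => Y YF ->; rewrite key; apply: H.
rewrite /del_feas col; case: (is_coloop F e1).
- rewrite /twist -!imset_comp; apply: eq_imset => X /=; apply/setP => x.
  rewrite !(in_symdiff, inE).
  case: (eqVneq x e1) => [->|_] /=; by rewrite ?eqxx ?(negbTE ne).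
- rewrite /twist; apply/setP => Z; rewrite inE; apply/imsetP/andP.
  + case=> X; rewrite inE => /andP[XF eX] ->; split; first exact: imset_f.
    by rewrite key.
  + case=> /imsetP[X XF ->]; rewrite key => eX; exists X => //.
    by rewrite inE XF eX.
Qed.

Theorem lemma3 (T : finType) (E : {set T}) (F : {set {set T}}) (e1 e2 : T) :
  is_delta_matroid E F -> e1 \in E -> e2 \in E -> e1 != e2 ->
  primal_type (del_feas F e1) e2 = primal_type F e2.
Proof.
move=> [_ [_ ex]] _ _ ne.
have rl G : exch G -> ribbon_loop (del_feas G e1) e2 = ribbon_loop G e2.
  move=> exG; rewrite /del_feas; case: ifP => c; first exact: rl_coloop c ne.
  by apply: rl_nc => //; rewrite c.
rewrite /primal_type twist_del // rl // rl //; exact: exch_twist.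
Qed.
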